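(* Let $m,r$ be integers with $m>1$, $r>2$, and let $S\in\mathcal{MA}(m,r)$. Define $S_0=S$ and, for $n\in\mathbb{N}$, $S_{n+1}=\langle \mathrm{msg}(S_n)\setminus\{\mathrm{M}(S_n)\}\rangle$ if $S_n\neq\langle m,r\rangle$, and $S_{n+1}=\langle m,r\rangle$ otherwise. Then $S_n\in\mathcal{MA}(m,r)$ for all $n\in\mathbb{N}$, and $S_k=\langle m,r\rangle$ for all $k\geq \mathrm{e}(S)-2$.
   Context: $\mathbb{N}=\{0,1,2,\ldots\}$. A numerical semigroup is a subset $S\subseteq\mathbb{N}$ closed under addition, containing $0$, with finite complement; $\langle A\rangle$ is the submonoid generated by $A$; $\mathrm{msg}(S)=\{n_1<\cdots<n_e\}$ is the unique finite minimal system of generators, $\mathrm{e}(S)=e$, $\mathrm{m}(S)=n_1$, $\mathrm{r}(S)=n_2$, $\mathrm{M}(S)=n_e$. $S$ is a MANS-semigroup if $w(1)<\cdots<w(\mathrm{m}(S)-1)$, where $w(i)$ is the least element of $S$ congruent to $i$ modulo $\mathrm{m}(S)$. $\mathcal{MA}(m,r)$ is the set of MANS-semigroups $S$ with $\mathrm{m}(S)=m$ and $\mathrm{r}(S)=r$. *)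

(* Defs.v *)
From Stdlib Require Import ClassicalEpsilon.
From mathcomp Require Import all_boot.
Set Implicit Arguments. Unset Strict Implicit. Unset Printing Implicit Defensive.

(* <A> : the submonoid of N generated by the finite set A (given as a seq). *)
Inductive gen (A : seq nat) : nat -> Prop :=
| gen0 : gen A 0
| genS a x : a \in A -> gen A x -> gen A (a + x).

Definition seteq (S T : nat -> Prop) : Prop := forall x, S x <-> T x.

Definition numsg (S : nat -> Prop) : Prop :=
  [/\ S 0, (forall x y, S x -> S y -> S (x + y))
    & exists N, forall n, N <= n -> S n].

Definition is_msg (S : nat -> Prop) (s : seq nat) : Prop :=
  [/\ sorted ltn s, seteq (gen s) S
    & forall t : seq nat, {subset t <= s} -> seteq (gen t) S -> {subset s <= t}].

Definition msg (S : nat -> Prop) : seq nat := epsilon (inhabits [::]) (is_msg S).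

Definition emb (S : nat -> Prop) : nat := size (msg S).
Definition mult (S : nat -> Prop) : nat := nth 0 (msg S) 0.
Definition rS (S : nat -> Prop) : nat := nth 0 (msg S) 1.
Definition MS (S : nat -> Prop) : nat := last 0 (msg S).

Definition is_w (S : nat -> Prop) (m i w : nat) : Prop :=
  [/\ S w, w = i %[mod m] & forall y, S y -> y = i %[mod m] -> w <= y].

Definition MANS (S : nat -> Prop) : Prop :=
  numsg S /\
  forall i j wi wj, 1 <= i -> i < j -> j <= (mult S).-1 ->
    is_w S (mult S) i wi -> is_w S (mult S) j wj -> wi < wj.

Definition MA (m r : nat) (S : nat -> Prop) : Prop :=
  [/\ MANS S, mult S = m & rS S = r].

Fixpoint Sseq (S : nat -> Prop) (m r n : nat) : nat -> Prop :=
  match n with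
  | 0 => S
  | n'.+1 =>
      let T := Sseq S m r n' in
      fun x =>
        (~ seteq T (gen [:: m; r]) /\ gen [seq y <- msg T | y != MS T] x)
        \/ (seteq T (gen [:: m; r]) /\ gen [:: m; r] x)
  end.

(* Main.v *)
Require Import Defs.
From Stdlib Require Import ClassicalEpsilon Classical.
From mathcomp Require Import all_boot zify.
Set Implicit Arguments. Unset Strict Implicit. Unset Printing Implicit Defensive.

Lemma gen_add A x y : gen A x -> gen A y -> gen A (x + y).
Proof. move=> gx gy; elim: gx => [|a x' Ha _ IH]; first by []. by rewrite -addnA; apply: genS. Qed.

Lemma gen_mem A a : a \in A -> gen A a.
Proof. by move=> Ha; rewrite -[a]addn0; apply: genS => //; apply: gen0. Qed.

Lemma gen_mul A a t : a \in A -> gen A (t * a).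
Proof. move=> Ha; elim: t => [|t IH]; first exact: gen0. by rewrite mulSn; apply: genS. Qed.

Lemma gen_sub A B x : {subset A <= B} -> gen A x -> gen B x.
Proof. move=> sAB; elim=> [|a y Ha _ IH]; [exact: gen0| apply: genS => //; exact: sAB]. Qed.

Lemma gen_closed (S : nat -> Prop) A x : S 0 -> (forall x y, S x -> S y -> S (x + y)) ->
  (forall a, a \in A -> S a) -> gen A x -> S x.
Proof. move=> S0 Sadd SA; elim=> [|a y Ha _ IH] //; apply: Sadd => //; exact: SA. Qed.

Lemma min_ex (P : nat -> Prop) n : P n -> exists x, P x /\ forall y, P y -> x <= y.
Proof.
elim/ltn_ind: n => n IH Pn.
case: (classic (exists y, y < n /\ P y)) => [[y [yn Py]]|H]; first exact: IH Py.
exists n; split => // y Py; rewrite leqNgt; apply/negP => yn; apply: H; by exists y.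
Qed.

Definition irr (S : nat -> Prop) x :=
  [/\ S x, 0 < x & forall a b, S a -> S b -> x = a + b -> a = 0 \/ b = 0].

Lemma irr_in (S : nat -> Prop) t g : irr S g -> (forall x, gen t x -> S x) -> gen t g -> g \in t.
Proof.
move=> [Sg g0 Hg] tS gt.
suff: forall z, gen t z -> z = g -> g \in t by move/(_ g gt erefl).
move=> z; elim=> [|a z' Ha gz' IH] E; first by move: g0; rewrite -E.
have Sa : S a by apply: tS; exact: gen_mem.
have Sz : S z' by apply: tS.
case: (Hg a z' Sa Sz (esym E)) => [a0|z0].
  by apply: IH; rewrite -E a0.
by move: E; rewrite z0 addn0 => <-.
Qed.

Lemma gen_filter_small s x z : gen s z -> z < x -> gen [seq y <- s | y != x] z.
Proof.
elim=> [|a z' Ha _ IH] lt; first exact: gen0.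
apply: genS; last by apply: IH; lia.
by rewrite mem_filter Ha andbT; apply/eqP => ax; lia.
Qed.

Lemma is_msg_mem S s x : is_msg S s -> (x \in s <-> irr S x).
Proof.
move=> [so gs mn]; split; last first.
  move=> ix; apply: (irr_in ix); first by move=> y /gs.
  by case: ix => Sx _ _; apply/gs.
move=> xs.
have Sx : S x by apply/gs; exact: gen_mem.
have x0 : 0 < x.
  case: (posnP x) => // x0; subst x.
  have H : {subset [seq y <- s | y != 0] <= s} by move=> y; rewrite mem_filter => /andP[].
  have: {subset s <= [seq y <- s | y != 0]}.
    apply: mn => // y; split => [gy|/gs gy]; first by apply/gs; exact: gen_sub gy.
    elim: gy => [|a y' Ha _ IH]; first exact: gen0.
    case: (posnP a) => [->//|a0]; apply: genS => //; by rewrite mem_filter Ha -lt0n a0.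
  by move/(_ 0 xs); rewrite mem_filter eqxx.
split => // a b Sa Sb E.
case: (posnP a) => [|a0]; first by left.
case: (posnP b) => [|b0]; first by right.
exfalso.
have H : {subset [seq y <- s | y != x] <= s} by move=> y; rewrite mem_filter => /andP[].
have gx : gen [seq y <- s | y != x] x.
  rewrite E; apply: gen_add; apply: gen_filter_small; try (apply/gs => //); lia.
have: {subset s <= [seq y <- s | y != x]}.
  apply: mn => // y; split => [gy|/gs gy]; first by apply/gs; exact: gen_sub gy.
  elim: gy => [|a' y' Ha _ IH]; first exact: gen0.
  case: (eqVneq a' x) => [->|ne]; first exact: gen_add.
  by apply: genS => //; rewrite mem_filter Ha ne.
by move/(_ x xs); rewrite mem_filter eqxx.
Qed.

Lemma is_msg_uniq S s1 s2 : is_msg S s1 -> is_msg S s2 -> s1 = s2.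
Proof.
move=> h1 h2; have [so1 _ _] := h1; have [so2 _ _] := h2.
apply: (irr_sorted_eq ltn_trans ltnn) => // x.
apply/idP/idP => H.
  by apply/(is_msg_mem x h2); apply/(is_msg_mem x h1).
by apply/(is_msg_mem x h1); apply/(is_msg_mem x h2).
Qed.

Definition bP (P : Prop) : bool := if excluded_middle_informative P then true else false.
Lemma bPE P : bP P <-> P.
Proof. by rewrite /bP; case: excluded_middle_informative. Qed.

Lemma msg_exists S : numsg S -> exists s, is_msg S s.
Proof.
move=> [S0 Sadd [N HN]].
pose s := [seq x <- iota 1 (N + N).+1 | bP (irr S x)].
have ms x : x \in s <-> irr S x.
  rewrite mem_filter mem_iota; split; first by move/andP => [/bPE].
  move=> ix; apply/andP; split; first exact/bPE.
  case: ix => Sx x0 Hx; apply/andP; split => //.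
  rewrite ltnNge; apply/negP => le.
  have: N.+1 = 0 \/ x - N.+1 = 0.
    apply: Hx; [apply: HN; lia| apply: HN; lia| lia].
  lia.
exists s; split.
- apply: sorted_filter; [exact: ltn_trans| exact: iota_ltn_sorted].
- move=> x; split; first by apply: gen_closed => // a /ms [].
  elim/ltn_ind: x => x IH Sx.
  case: (posnP x) => [->|x0]; first exact: gen0.
  case: (classic (irr S x)) => [/ms xs|nx]; first exact: gen_mem.
  have: exists a b, [/\ S a, S b, x = a + b, 0 < a & 0 < b].
    apply: NNPP => H; apply: nx; split => // a b Sa Sb E.
    case: (posnP a) => [|a0]; first by left.
    case: (posnP b) => [|b0]; first by right.
    exfalso; apply: H; by exists a, b.
  move=> [a [b [Sa Sb E a0 b0]]]; rewrite E; apply: gen_add; apply: IH => //; lia.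
- move=> t st gt y /ms iy; apply: (irr_in iy); first by move=> z /gt.
  by apply/gt; case: iy.
Qed.

Lemma msg_spec S : numsg S -> is_msg S (msg S).
Proof. by move=> nS; apply: epsilon_spec; apply: msg_exists. Qed.

Lemma msg_eq S s : is_msg S s -> msg S = s.
Proof. move=> h; apply: (is_msg_uniq _ h); apply: epsilon_spec; by exists s. Qed.

Lemma is_msg_ext S T s : seteq S T -> is_msg S s -> is_msg T s.
Proof.
move=> e [so gs mn]; split => //; first by move=> x; rewrite -e; exact: gs.
move=> t st gt; apply: mn => // x; rewrite e; exact: gt.
Qed.

Lemma MA_ext m r S T : MA m r S -> seteq S T -> MA m r T.
Proof.
move=> [[[S0 Sadd [N HN]] Hw] hm hr] e.
have nS : numsg S by split => //; exists N.
have ms : msg T = msg S by apply: msg_eq; apply: (is_msg_ext e); exact: msg_spec.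
have mT : mult T = mult S by rewrite /mult ms.
have rT : rS T = rS S by rewrite /rS ms.
have ew : forall k i w, is_w T k i w -> is_w S k i w.
  move=> k i w [Tw wm wmin]; split; [exact/e| done| move=> y /e; exact: wmin].
split; rewrite ?mT ?rT //; split.
  split; [exact/e| move=> x y /e Sx /e Sy; apply/e; exact: Sadd| exists N => n /HN ?; by apply/(e n)].
move=> i j wi wj; rewrite mT => h1 h2 h3 /ew h4 /ew h5; exact: (Hw i j wi wj h1 h2 h3 h4 h5).
Qed.

Lemma mod_add m a b p q : 0 < m -> a %% m = p -> b %% m = q -> p + q < m -> (a + b) %% m = p + q.
Proof. move=> m0 ha hb lt; rewrite modnD // ha hb; have -> : (m <= p + q) = false by lia. lia. Qed.

Lemma mod_sub m x g j c : 0 < m -> g <= x -> x %% m = j -> g %% m = c -> c <= j -> (x - g) %% m = j - c.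
Proof. move=> m0 le hx hg cj; rewrite modnB // hx hg; have -> : (j < c) = false by lia. lia. Qed.

Lemma mod_wrap m M y k i : 0 < m -> (M + y) %% m = i -> M %% m = k -> i < k -> y %% m = i + m - k.
Proof.
move=> m0; rewrite modnD // => <- <-; have := ltn_pmod y m0; have := ltn_pmod M m0.
move: (M %% m) (y %% m) => a b. case: (leqP m (a + b)) => h /=; lia.
Qed.

Lemma w_exists (S : nat -> Prop) m i : numsg S -> 0 < m ->
  exists w, is_w S m i w.
Proof.
move=> [S0 Sadd [N HN]] m0.
have P0 : S (i + N * m) /\ (i + N * m) %% m = i %% m.
  split; first by apply: HN; have := leq_pmull N m0; lia.
  by rewrite addnC modnMDl.
have [w [[Sw wm] wmin]] := @min_ex (fun x => S x /\ x %% m = i %% m) _ P0.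
exists w; split => // y Sy ym; exact: wmin.
Qed.

Lemma gen_split s' M x : gen (rcons s' M) x -> gen s' x \/ exists y, gen (rcons s' M) y /\ x = M + y.
Proof.
elim=> [|a x' Ha gx IH]; first by left; exact: gen0.
move: Ha; rewrite mem_rcons in_cons => /orP[/eqP ->|as']; first by right; exists x'.
case: IH => [g|[y [gy ->]]]; first by left; exact: genS.
right; exists (a + y); split; last lia.
by apply: genS => //; rewrite mem_rcons in_cons as' orbT.
Qed.

Lemma gen_nz A m x : gen A x -> x %% m != 0 ->
  exists g, [/\ g \in A, g %% m != 0, g <= x & gen A (x - g)].
Proof.
elim=> [|a x' Ha gx IH]; first by rewrite mod0n.
case: (eqVneq (a %% m) 0) => [a0|an] nz; last first.
  by exists a; split => //; [rewrite leq_addr| rewrite addKn].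
have : x' %% m != 0 by move: nz; rewrite -modnDml a0.
case/IH => g [gA gn gx' gr]; exists g; split => //; first by rewrite (leq_trans gx') // leq_addl.
by rewrite -addnBA //; apply: genS.
Qed.

Lemma gen_mod0 s m r x : (forall a, a \in s -> a = m \/ r <= a) -> gen s x -> x < r -> x %% m = 0.
Proof.
move=> hs; elim=> [|a x' Ha gx IH] lt; first by rewrite mod0n.
case: (hs a Ha) => [->|]; last lia.
by rewrite -modnDmr IH ?addn0 ?modnn //; lia.
Qed.

Lemma irr_w (S : nat -> Prop) m g : (forall x y, S x -> S y -> S (x + y)) -> S 0 ->
  irr S g -> S m -> 0 < m -> g != m ->
  forall y, S y -> y %% m = g %% m -> g <= y.
Proof.
move=> Sadd S0 [Sg g0 Hg] Sm m0 gm y Sy ym.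
rewrite leqNgt; apply/negP => lt.
have d : (g - y) %% m = 0 by rewrite (mod_sub m0 (ltnW lt) erefl ym) ?subnn.
have e : g - y = (g - y) %/ m * m by rewrite {1}(divn_eq (g - y) m) d addn0.
set t := (g - y) %/ m in e.
have t0 : 0 < t by case: (posnP t) => // t0; move: e; rewrite t0 mul0n; lia.
have Smul : forall u, S (u * m) by elim=> [|u IH]; [rewrite mul0n| rewrite mulSn; apply: Sadd].
have := Hg m (y + (t - 1) * m) Sm (Sadd _ _ Sy (Smul _)).
have E : g = m + (y + (t - 1) * m).
  rewrite mulnBl mul1n; have : m <= t * m by rewrite leq_pmull.
  lia.
case/(_ E) => [|z]; first lia.
by move: gm; rewrite E z addn0 eqxx.
Qed.

Ltac clear_mod := repeat match goal with H : context [modn _ _] |- _ => clear H end.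
Ltac mlia := clear_mod; lia.

Lemma step_core m r S s' M :
  1 < m -> numsg S ->
  (forall i j wi wj, 0 < i -> i < j -> j <= m.-1 -> is_w S m i wi -> is_w S m j wj -> wi < wj) ->
  is_msg S (rcons s' M) -> nth 0 s' 0 = m -> nth 0 s' 1 = r -> 1 < size s' ->
  MA m r (gen s') /\ is_msg (gen s') s'.
Proof.
move=> m1 nS Hw ims hm hr sz.
have m0 : 0 < m by apply: ltnW.
have [S0 Sadd [N HN]] := nS.
have [so gs mn] := ims.
have nthlt : forall i j, i < j -> j <= size s' -> nth 0 (rcons s' M) i < nth 0 (rcons s' M) j.
  move=> i j ij js; apply: (sorted_ltn_nth ltn_trans) => //; rewrite inE size_rcons ltnS //.
  exact: leq_trans (ltnW ij) js.
have nthr : forall i, i < size s' -> nth 0 (rcons s' M) i = nth 0 s' i.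
  by move=> i ?; rewrite nth_rcons ifT.
have nthM : nth 0 (rcons s' M) (size s') = M by rewrite nth_rcons ltnn eqxx.
have ltM : forall g, g \in s' -> g < M.
  move=> g gs'; have gi : index g s' < size s' by rewrite index_mem.
  have := nthlt _ _ gi (leqnn _); by rewrite nthr // nth_index // nthM.
have mr : m < r.
  have := nthlt 0 1 erefl (ltnW sz); by rewrite !nthr ?hm ?hr //; apply: ltnW.
have ms' : m \in s' by rewrite -hm mem_nth //; apply: ltnW.
have rs' : r \in s' by rewrite -hr mem_nth.
have hs : forall a, a \in rcons s' M -> a = m \/ r <= a.
  move=> a; rewrite mem_rcons in_cons => /orP[/eqP ->|as']; first by right; apply: ltnW; apply: ltM.
  have ai : index a s' < size s' by rewrite index_mem.
  have na : nth 0 s' (index a s') = a by rewrite nth_index.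
  move: ai na; case: (index a s') => [|[|i]] ai <-; [by left| by right; rewrite hr|right].
  have := nthlt 1 i.+2 erefl (ltnW ai); rewrite !nthr // => h; rewrite -hr; exact: ltnW.
have Sx : forall x, S x <-> gen (rcons s' M) x by move=> x; split => /gs.
have Sm : S m by apply/Sx; apply: gen_mem; rewrite mem_rcons in_cons ms' orbT.
have irrS : forall x, x \in rcons s' M -> irr S x by move=> x /(is_msg_mem x ims).
have Mmem : M \in rcons s' M by rewrite mem_rcons in_cons eqxx.
have irS : forall x, x \in rcons s' M -> S x by move=> x /irrS [].
have mM : m < M by apply: ltM.
have Mm : M != m by rewrite gtn_eqF.
have [k kE] : exists k, M %% m = k by eexists.
have wM : forall y, S y -> y %% m = k -> M <= y.
  move=> y Sy yk; apply: (irr_w Sadd S0 (irrS M Mmem) Sm m0 Mm Sy); by rewrite yk kE.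
have k0 : 0 < k.
  rewrite lt0n; apply/negP => /eqP k0.
  have := wM 0 S0; rewrite mod0n k0 => /(_ erefl); rewrite leqn0 => /eqP M0.
  by move: mM; rewrite M0.
have kltm : k < m by rewrite -kE ltn_pmod.
have km : k <= m.-1 by rewrite -ltnS prednK.
have kisw : is_w S m k M.
  split; [exact: irS| by rewrite kE modn_small| move=> y Sy; rewrite (modn_small kltm); exact: wM].
have cres : forall g, g \in s' -> g %% m != 0 -> 0 < g %% m < k.
  move=> g gs' gn; rewrite lt0n gn /=.
  have gm : g != m by apply/eqP => E; move: gn; rewrite E modnn.
  have ig : irr S g by apply: irrS; rewrite mem_rcons in_cons gs' orbT.
  have wg := irr_w Sadd S0 ig Sm m0 gm.
  case: (ltngtP (g %% m) k) => // c.
  - have : M < g.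
      apply: (Hw k (g %% m) M g) => //; last first.
        by split; [apply: irS; rewrite mem_rcons in_cons gs' orbT| rewrite modn_mod| move=> y Sy; rewrite modn_mod; exact: wg].
      by rewrite -ltnS prednK // ltn_pmod.
    by rewrite ltnNge ltnW // ltM.
  - have gS : S g by apply: irS; rewrite mem_rcons in_cons gs' orbT.
    have := wg M (irS M Mmem) (etrans kE (esym c)); have := wM g gS c.
    by have := ltM g gs'; mlia.
have r1 : r %% m = 1.
  have [w1 [Sw1 w1m w1min]] := w_exists 1 nS m0.
  have rm : r != m by rewrite gtn_eqF.
  have ir : irr S r by apply: irrS; rewrite mem_rcons in_cons rs' orbT.
  have wr := irr_w Sadd S0 ir Sm m0 rm.
  have rn : r %% m != 0.
    apply/negP => /eqP r0; have := wr 0 S0; rewrite mod0n r0 => /(_ erefl).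
    by rewrite leqn0 => /eqP r00; move: mr; rewrite r00.
  case: (eqVneq (r %% m) 1) => // ne; exfalso.
  have : w1 < r.
    apply: (Hw 1 (r %% m) w1 r) => //.
    - by rewrite ltn_neqAle eq_sym ne lt0n rn.
    - by rewrite -ltnS prednK // ltn_pmod.
    - by split => //; [apply: irS; rewrite mem_rcons in_cons rs' orbT| rewrite modn_mod| move=> y Sy; rewrite modn_mod; exact: wr].
  move=> lt; have := gen_mod0 hs ((Sx w1).1 Sw1) lt.
  by rewrite w1m modn_small.
pose T := gen s'.
have TS : forall x, T x -> S x.
  have sub : {subset s' <= rcons s' M} by move=> y ys; rewrite mem_rcons in_cons ys orbT.
  move=> x Tx; apply/Sx; exact: gen_sub sub Tx.
have F8 : forall i w, 0 < i -> i < k -> is_w S m i w -> T w.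
  move=> i w i0 ik [Sw wm wmin].
  have [Tw|[y [gy E]]] := gen_split (proj1 (Sx w) Sw); first exact: Tw.
  exfalso.
  have im : i < m by apply: ltn_trans ik kltm.
  have wm' : (M + y) %% m = i by rewrite -E wm modn_small.
  have yres := mod_wrap m0 wm' kE ik.
  have [wl [Swl wlm wlmin]] := w_exists (i + m - k) nS m0.
  have lt : w < wl.
    apply: (Hw i (i + m - k)) => //.
    - move: kltm; clear; mlia.
    - move: kltm ik; clear; mlia.
  have ls : i + m - k < m by move: ik kltm; clear; mlia.
  have h : wl <= y by apply: wlmin; [exact: (proj2 (Sx y) gy)| rewrite yres (modn_small ls)].
  have := leq_trans h (leq_addl M y); rewrite -E => h2.
  by move: (leq_ltn_trans h2 lt); rewrite ltnn.
have Q : forall j, 1 < j -> j <= m.-1 -> forall x, T x -> x %% m = j ->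
    exists y, [/\ T y, y %% m = j.-1 & y < x].
  elim/ltn_ind => j IH j1 jm x Tx xm.
  have jlt : j < m by rewrite -ltnS prednK // in jm.
  case: (leqP j k) => jk.
  - have [w [Sw wm wmin]] := w_exists j.-1 nS m0.
    have [wj [Swj wjm wjmin]] := w_exists j nS m0.
    have lt : w < wj.
      apply: (Hw j.-1 j) => //; try mlia.
    have : wj <= x by apply: wjmin; [exact: TS| rewrite xm modn_small].
    move=> le; exists w; split.
    + apply: (F8 j.-1) => //; [mlia| mlia].
    + by rewrite wm modn_small //; mlia.
    + exact: leq_trans lt le.
  - have xn : x %% m != 0 by rewrite xm; mlia.
    have [g [gs'' gn gx gr]] := gen_nz Tx xn.
    have [c0 ck] := andP (cres g gs'' gn).
    have [c cE] : exists c, g %% m = c by eexists.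
    rewrite cE in gn c0 ck.
    have y0m : (x - g) %% m = j - c by apply: mod_sub => //; mlia.
    have g0 : 0 < g by case: (posnP g) cE gn => // ->; rewrite mod0n => <-.
    case: (eqVneq c 1) => [c1|c1].
      exists (x - g); split => //; [by rewrite y0m c1 subn1| mlia].
    have [z [Tz zm zg]] : exists z, [/\ T z, z %% m = c.-1 & z < g].
      apply: (IH c) => //; [mlia| mlia| mlia| exact: gen_mem].
    exists (x - g + z); split.
    + exact: gen_add.
    + rewrite (mod_add m0 y0m zm); mlia.
    + mlia.
have chain : forall d i, 0 < i -> i + d.+1 <= m.-1 -> forall x, T x -> x %% m = i + d.+1 ->
    exists y, [/\ T y, y %% m = i & y < x].
  elim=> [|d IH] i i0 im x Tx xm.
    have [y [Ty ym yx]] := Q (i + 1) ltac:(mlia) im x Tx xm.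
    by exists y; split => //; rewrite ym addn1.
  have [y [Ty ym yx]] := Q (i + d.+2) ltac:(mlia) im x Tx xm.
  have [z [Tz zm zy]] := IH i i0 ltac:(mlia) y Ty ltac:(rewrite ym; mlia).
  by exists z; split => //; apply: ltn_trans yx.
have nT : numsg T.
  split; [exact: gen0| move=> x y; exact: gen_add|].
  exists (m.-1 * r) => n le.
  set i := n %% m.
  have im : i <= m.-1 by rewrite -ltnS prednK // ltn_pmod.
  have ir : i * r <= n by apply: leq_trans le; rewrite leq_mul2r im orbT.
  have irm : (i * r) %% m = i by rewrite -modnMm r1 muln1 modn_mod modn_small // ltn_pmod.
  have d0 : (n - i * r) %% m = 0 by rewrite (mod_sub m0 ir erefl irm) // subnn.
  have -> : n = i * r + (n - i * r)%/ m * m.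
    have e := divn_eq (n - i * r) m; rewrite d0 addn0 in e; by rewrite -e subnKC.

  by apply: gen_add; apply: gen_mul.
have imsT : is_msg T s'.
  split.
  - exact: (subseq_sorted ltn_trans (subseq_rcons s' M) so).
  - by [].
  - move=> t st gt g gs''.
    have [Sg g0 Hg] := irrS g ltac:(by rewrite mem_rcons in_cons gs'' orbT).
    have ig : irr T g.
      split => //; first exact: gen_mem.
      move=> a b Ta Tb; apply: Hg; exact: TS.
    apply: (irr_in ig); first by move=> x /gt.
    by apply/gt; exact: gen_mem.
have msgT : msg T = s' by apply: msg_eq.
have multT : mult T = m by rewrite /mult msgT.
have rT : rS T = r by rewrite /rS msgT.
split => //; split => //; split => //.
move=> i j wi wj i0 ij; rewrite multT => jm [Twi wim wimin] [Twj wjm wjmin].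
have jlt : j < m by rewrite -ltnS prednK // in jm.
have [y [Ty ym yx]] := chain (j - i).-1 i i0 ltac:(mlia) wj Twj ltac:(rewrite wjm modn_small //; mlia).
have : wi <= y by apply: wimin => //; rewrite ym modn_small //; mlia.
move=> h; exact: leq_ltn_trans h yx.
Qed.

Lemma MA_size m r T : 2 < r -> MA m r T -> 1 < size (msg T).
Proof.
move=> r2 [_ _ hr]; rewrite ltnNge; apply/negP => le.
by move: hr; rewrite /rS nth_default // => r0; move: r2; rewrite -r0.
Qed.

Lemma MA_two m r T : MA m r T -> size (msg T) = 2 -> seteq T (gen [:: m; r]).
Proof.
move=> [[nT _] hm hr] s2.
have [_ gs _] := msg_spec nT.
move: hm hr gs s2; rewrite /mult /rS; case: (msg T) => [|a [|b [|c t]]] //= -> -> gs _ x.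
by split => /gs.
Qed.

Lemma step_full m r T : 1 < m -> 2 < r -> MA m r T -> ~ seteq T (gen [:: m; r]) ->
  let F := [seq y <- msg T | y != MS T] in
  MA m r (gen F) /\ msg (gen F) = F /\ size F + 1 = emb T.
Proof.
move=> m1 r2 hT ne F.
have sz := MA_size r2 hT.
have [[nT Hw] hm hr] := hT.
rewrite hm in Hw.
have ims := msg_spec nT.
have sz3 : 2 < size (msg T).
  rewrite ltn_neqAle sz andbT; apply/negP => /eqP e; apply: ne; exact: MA_two hT (esym e).
rewrite /F /MS /emb; move: hm hr ims sz3; rewrite /mult /rS.
case: (msg T) => [//|a t] hm hr ims sz3.
rewrite lastI in hm hr ims sz3 *.
move: (belast a t) (last a t) hm hr ims sz3 => s' M hm hr ims sz3.
rewrite size_rcons in sz3.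
have uq : uniq (rcons s' M) by apply: (sorted_uniq ltn_trans ltnn); case: ims.
move: (uq); rewrite rcons_uniq => /andP[Mn _].
have fe : [seq y <- rcons s' M | y != last 0 (rcons s' M)] = s'.
  rewrite last_rcons filter_rcons eqxx /=; apply/all_filterP/allP => y ys.
  by apply/eqP => yM; move: Mn; rewrite -yM ys.
rewrite fe size_rcons addn1.
have sz2 : 1 < size s' by rewrite ltnS in sz3.
have hm' : nth 0 s' 0 = m by move: hm; rewrite nth_rcons ifT //; apply: ltnW.
have hr' : nth 0 s' 1 = r by move: hr; rewrite nth_rcons ifT.
have [h1 h2] := step_core m1 nT Hw ims hm' hr' sz2.
split => //; split => //; exact: msg_eq.
Qed.

Theorem proposition4p8 (m r : nat) (S : nat -> Prop) :
  1 < m -> 2 < r -> MA m r S ->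
  (forall n, MA m r (Sseq S m r n)) /\
  (forall k, emb S - 2 <= k -> seteq (Sseq S m r k) (gen [:: m; r])).
Proof.
move=> m1 r2 hS.
have inv : forall n, MA m r (Sseq S m r n) /\
    (seteq (Sseq S m r n) (gen [:: m; r]) \/ emb (Sseq S m r n) + n = emb S).
  elim=> [|n [hT hd]]; first by split => //; right; rewrite addn0.
  set T := Sseq S m r n.
  have -> : Sseq S m r n.+1 = fun x =>
        (~ seteq T (gen [:: m; r]) /\ gen [seq y <- msg T | y != MS T] x)
        \/ (seteq T (gen [:: m; r]) /\ gen [:: m; r] x) by [].
  case: (classic (seteq T (gen [:: m; r]))) => [e|ne].
    have e' : seteq T (fun x => (~ seteq T (gen [:: m; r]) /\ gen [seq y <- msg T | y != MS T] x)
        \/ (seteq T (gen [:: m; r]) /\ gen [:: m; r] x)).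
      move=> x; split => [/e Tx|[[]//|[_ /e]//]]; by right.
    split; first exact: MA_ext hT e'.
    left => x; split => [[[]//|[]//]|gx]; by right.
  have [h1 [h2 h3]] := step_full m1 r2 hT ne.
  have e' : seteq (gen [seq y <- msg T | y != MS T]) (fun x => (~ seteq T (gen [:: m; r]) /\ gen [seq y <- msg T | y != MS T] x)
        \/ (seteq T (gen [:: m; r]) /\ gen [:: m; r] x)).
    move=> x; split => [gx|[[]//|[]//]]; by left.
  split; first exact: MA_ext h1 e'.
  right; case: hd => [//|hd].
  have hS' : MA m r (gen [seq y <- msg T | y != MS T]) := h1.
  have [[nF _] _ _] := h1.
  have mE : msg (fun x => (~ seteq T (gen [:: m; r]) /\ gen [seq y <- msg T | y != MS T] x)
        \/ (seteq T (gen [:: m; r]) /\ gen [:: m; r] x)) = [seq y <- msg T | y != MS T].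
    apply: msg_eq; apply: (is_msg_ext e'); rewrite -{2}h2; exact: msg_spec.
  rewrite /emb mE; move: h3 hd; rewrite /emb -/T => h3 hd; by rewrite -hd -h3 addn1 addSn addnS.
split => [n|k le]; first exact: (inv n).1.
have [hk [//|ek]] := inv k.
apply: (MA_two hk).
have := MA_size r2 hk; move: ek le; rewrite /emb; lia.
Qed.
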